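(* There exists an absolute constant $c_1>0$ with the following property. Let $(m_n)$ and $(M_n)$ be sequences with $0<m_n\le M_n$ and $M_n/m_n=o(n)$ as $n\to\infty$. Then for all sufficiently large $n$, every $V\in\mathcal{L}_n(m_n,M_n)$ is invertible and \[ \bigl\|V^{-1}-S\bigr\|\le \frac{c_1 M_n^2}{m_n^3 (n-1)^2}, \] where $S=S(V)$ is the matrix associated with $V$ defined in the context.
   Context: For a matrix $A=(a_{i,j})$, $\|A\|:=\max_{i,j}|a_{i,j}|$. Class $\mathcal{L}_n(m,M)$: for $0<m\le M$, a $(2n-1)\times(2n-1)$ real symmetric matrix $V=(v_{i,j})$ belongs to $\mathcal{L}_n(m,M)$ if: (i) $v_{i,j}=0$ whenever $i\ne j$ and both $i,j\in\{1,\dots,n\}$, or both $i,j\in\{n+1,\dots,2n-1\}$; (ii) $v_{i,n+i}=v_{n+i,i}=0$ for $i=1,\dots,n-1$; (iii) $m\le v_{i,j}=v_{j,i}\le M$ for $i\in\{1,\dots,n\}$, $j\in\{n+1,\dots,2n-1\}$, $j\neq n+i$; (iv) $m\le v_{i,i}-\sum_{j=n+1}^{2n-1}v_{i,j}\le M$ for $i=1,\dots,n-1$, and $v_{n,n}=\sum_{j=n+1}^{2n-1}v_{n,j}$; (v) $v_{i,i}=\sum_{k=1}^n v_{k,i}$ for $i=n+1,\dots,2n-1$. Associated quantities: $v_{2n,i}=v_{i,2n}:=v_{i,i}-\sum_{j=1,j\ne i}^{2n-1}v_{i,j}$ for $i=1,\dots,2n-1$, and $v_{2n,2n}:=\sum_{i=1}^{2n-1}v_{2n,i}$.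 The $(2n-1)\times(2n-1)$ matrix $S=(s_{i,j})$ is defined by $s_{i,j}=\delta_{i,j}/v_{i,i}+1/v_{2n,2n}$ if $i,j\in\{1,\dots,n\}$ or $i,j\in\{n+1,\dots,2n-1\}$, and $s_{i,j}=-1/v_{2n,2n}$ if one of $i,j$ lies in $\{1,\dots,n\}$ and the other in $\{n+1,\dots,2n-1\}$; here $\delta_{i,j}$ is the Kronecker delta. *)

(* Defs.v *)
(* Indices are 0-based: paper index p corresponds to i = p-1.
   First block {1..n}  <-> i < n ; second block {n+1..2n-1} <-> n <= i < 2n-1. *)
From HB Require Import structures.
From mathcomp Require Import all_boot all_order all_algebra.
Set Implicit Arguments. Unset Strict Implicit. Unset Printing Implicit Defensive.
Import Order.TTheory GRing.Theory Num.Theory.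
Local Open Scope ring_scope.

Notation dimL n := ((n.*2).-1)%N.

Definition mxnorm (R : realFieldType) (p q : nat) (A : 'M[R]_(p, q)) : R :=
  \big[Num.max/0]_(i < p) \big[Num.max/0]_(j < q) `|A i j|.

Definition inL (R : realFieldType) (n : nat) (m M : R) (V : 'M[R]_(dimL n)) : Prop :=
  V^T = V /\
      (forall i j : 'I_(dimL n), i != j -> ((i < n)%N = (j < n)%N) -> V i j = 0) /\
      (forall i j : 'I_(dimL n), (i < n.-1)%N -> (j : nat) = (n + i)%N ->
          V i j = 0 /\ V j i = 0) /\
      (forall i j : 'I_(dimL n), (i < n)%N -> (n <= j)%N -> (j : nat) != (n + i)%N ->
          m <= V i j <= M /\ V i j = V j i) /\
      (forall i : 'I_(dimL n), (i < n.-1)%N ->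
          m <= V i i - \sum_(j < dimL n | (n <= j)%N) V i j <= M) /\
      (forall i : 'I_(dimL n), (i : nat) = n.-1 ->
          V i i = \sum_(j < dimL n | (n <= j)%N) V i j) /\
      (forall i : 'I_(dimL n), (n <= i)%N ->
          V i i = \sum_(k < dimL n | (k < n)%N) V k i).

(* v_{2n,i} = v_{i,i} - sum_{j <> i} v_{i,j} *)
Definition vlast (R : realFieldType) (n : nat) (V : 'M[R]_(dimL n)) (i : 'I_(dimL n)) : R :=
  V i i - \sum_(j < dimL n | j != i) V i j.

(* v_{2n,2n} = sum_i v_{2n,i} *)
Definition vcorner (R : realFieldType) (n : nat) (V : 'M[R]_(dimL n)) : R :=
  \sum_(i < dimL n) vlast V i.

Definition Smat (R : realFieldType) (n : nat) (V : 'M[R]_(dimL n)) : 'M[R]_(dimL n) :=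
  \matrix_(i, j)
    if ((i < n)%N == (j < n)%N)
    then (if i == j then (V i i)^-1 else 0) + (vcorner V)^-1
    else - (vcorner V)^-1.

(* Main.v *)
Require Import Defs.
From HB Require Import structures.
From mathcomp Require Import all_boot all_order all_algebra.
From mathcomp Require Import ring lra zify.
Import Order.TTheory GRing.Theory Num.Theory.
Local Open Scope ring_scope.

Module Helpers.
Set Implicit Arguments. Unset Strict Implicit. Unset Printing Implicit Defensive.


Definition uu (R : realFieldType) (n : nat) (r : 'I_(dimL n)) : R :=
  if (r < n)%N then 1 else -1.

Lemma sum_lb (R : realFieldType) (I : finType) (P Q : pred I) (z y : I -> R) (m Rr : R) :
  0 <= m -> 0 <= Rr -> (forall j1 j2, P j1 -> P j2 -> Q j1 -> Q j2 -> j1 = j2) ->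
  (forall j, P j -> 0 <= z j) -> (forall j, P j -> ~~ Q j -> m <= z j) ->
  (forall j, P j -> 0 <= y j <= Rr) ->
  m * (\sum_(j | P j) y j - Rr) <= \sum_(j | P j) z j * y j.
Proof.
move=> m0 R0 uQ z0 zm yb.
case: (pickP (fun j => P j && Q j)) => [o /andP[Po Qo] | none].
  rewrite (bigD1 o) //= [X in _ <= X](bigD1 o) //=.
  have h1 : m * (\sum_(i | P i && (i != o)) y i) <= \sum_(i | P i && (i != o)) z i * y i.
    rewrite mulr_sumr; apply: ler_sum => i /andP[Pi nio].
    have nQ : ~~ Q i by apply/negP => Qi; move/eqP: nio; apply; apply: uQ.
    by case/andP: (yb i Pi) => y0 _; apply: ler_wpM2r => //; apply: zm.
  have h2 : 0 <= z o * y o by case/andP: (yb o Po) => y0 _; apply: mulr_ge0 => //; apply: z0.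
  have h3 : m * (y o - Rr) <= 0.
    by case/andP: (yb o Po) => _ yR; apply: mulr_ge0_le0 => //; lra.
  have -> : m * (y o + \sum_(i | P i && (i != o)) y i - Rr) =
            m * (\sum_(i | P i && (i != o)) y i) + m * (y o - Rr) by ring.
  lra.
have h1 : m * (\sum_(i | P i) y i) <= \sum_(i | P i) z i * y i.
  rewrite mulr_sumr; apply: ler_sum => i Pi.
  have nQ : ~~ Q i by move: (none i); rewrite Pi /= => ->.
  by case/andP: (yb i Pi) => y0 _; apply: ler_wpM2r => //; apply: zm.
have h2 : 0 <= m * Rr by apply: mulr_ge0.
have -> : m * (\sum_(i | P i) y i - Rr) = m * (\sum_(i | P i) y i) - m * Rr by ring.
lra.
Qed.


Lemma Vsym (R : realFieldType) n m M (V : 'M[R]_(dimL n)) :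
  inL m M V -> forall i j : 'I_(dimL n), V i j = V j i.
Proof. by case=> HT _ i j; rewrite -{1}HT mxE. Qed.

Lemma Vblock (R : realFieldType) n m M (V : 'M[R]_(dimL n)) :
  inL m M V -> forall i j : 'I_(dimL n), i != j -> (i < n)%N = (j < n)%N -> V i j = 0.
Proof. by case=> _ [H _]. Qed.

Lemma VAB (R : realFieldType) n m M (V : 'M[R]_(dimL n)) :
  inL m M V -> forall i j : 'I_(dimL n), (i < n)%N -> (n <= j)%N -> (j : nat) != (n + i)%N ->
  m <= V i j.
Proof. by case=> _ [_ [_ [H _]]] i j a b c; case/andP: (H i j a b c).1. Qed.

Lemma Voff (R : realFieldType) n m M (V : 'M[R]_(dimL n)) :
  0 < m -> m <= M -> inL m M V -> forall k l : 'I_(dimL n), k != l -> 0 <= V k l <= M.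
Proof.
move=> m0 mM HL.
have key : forall i j : 'I_(dimL n), (i < n)%N -> (n <= j)%N -> 0 <= V i j <= M.
  move=> i j iA jB.
  case: HL => _ [_ [Hii [Hiii _]]].
  have [e|ne] := eqVneq (j : nat) (n + i)%N.
    have ilt : (i < n.-1)%N.
      have := ltn_ord j; rewrite e; move: (i : nat) => i'; rewrite -addnn; lia.
    by rewrite (Hii i j ilt e).1 lexx; lra.
  case/andP: (Hiii i j iA jB ne).1 => a b; apply/andP; split => //; lra.
move=> k l nkl.
case kA: (k < n)%N; case lA: (l < n)%N.
- by rewrite (Vblock HL nkl) ?kA ?lA //; apply/andP; split => //; lra.
- by apply: key => //; rewrite leqNgt lA.
- by rewrite (Vsym HL); apply: key => //; rewrite leqNgt kA.
- by rewrite (Vblock HL nkl) ?kA ?lA //; apply/andP; split => //; lra.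
Qed.

Lemma offsum (R : realFieldType) n m M (V : 'M[R]_(dimL n)) (k : 'I_(dimL n)) (F : 'I_(dimL n) -> R) :
  inL m M V -> (forall j, V k j = 0 -> F j = 0) ->
  \sum_(j : 'I_(dimL n) | j != k) F j = \sum_(j : 'I_(dimL n) | (j < n)%N != (k < n)%N) F j.
Proof.
move=> HL HF.
rewrite (bigID (fun j : 'I_(dimL n) => (j < n)%N == (k < n)%N)) /= big1 ?add0r.
  apply: eq_bigl => j /=; case: (eqVneq j k) => [->|_] /=; first by rewrite !eqxx.
  by [].
move=> j /andP[njk /eqP e]; apply: HF; apply: (Vblock HL); first by rewrite eq_sym.
by rewrite e.
Qed.

Lemma rowsum (R : realFieldType) n m M (V : 'M[R]_(dimL n)) (k : 'I_(dimL n)) (w : 'I_(dimL n) -> R) :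
  inL m M V ->
  \sum_r V k r * w r = V k k * w k + \sum_(r : 'I_(dimL n) | (r < n)%N != (k < n)%N) V k r * w r.
Proof.
move=> HL; rewrite (bigD1 k) //=; congr (_ + _).
by apply: (offsum HL) => j ->; rewrite mul0r.
Qed.

Lemma vlastE (R : realFieldType) n m M (V : 'M[R]_(dimL n)) (k : 'I_(dimL n)) :
  inL m M V -> vlast V k = V k k - \sum_(r : 'I_(dimL n) | (r < n)%N != (k < n)%N) V k r.
Proof. by move=> HL; rewrite /vlast (offsum HL). Qed.

Lemma sumB_eq (R : realFieldType) n (k : 'I_(dimL n)) (F : 'I_(dimL n) -> R) : (k < n)%N ->
  \sum_(r : 'I_(dimL n) | (r < n)%N != (k < n)%N) F r = \sum_(r : 'I_(dimL n) | (n <= r)%N) F r.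
Proof. by move=> kA; apply: eq_bigl => r; rewrite kA ltnNge; case: (n <= r)%N. Qed.

Lemma sumA_eq (R : realFieldType) n (k : 'I_(dimL n)) (F : 'I_(dimL n) -> R) : (n <= k)%N ->
  \sum_(r : 'I_(dimL n) | (r < n)%N != (k < n)%N) F r = \sum_(r : 'I_(dimL n) | (r < n)%N) F r.
Proof. by move=> kB; apply: eq_bigl => r; rewrite [(k < n)%N]ltnNge kB; case: (r < n)%N. Qed.

Lemma aA (R : realFieldType) n m M (V : 'M[R]_(dimL n)) (i : 'I_(dimL n)) :
  inL m M V -> (i < n)%N -> vlast V i = V i i - \sum_(j : 'I_(dimL n) | (n <= j)%N) V i j.
Proof. by move=> HL iA; rewrite (vlastE _ HL) sumB_eq. Qed.

Lemma aB (R : realFieldType) n m M (V : 'M[R]_(dimL n)) (j : 'I_(dimL n)) :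
  inL m M V -> (n <= j)%N -> vlast V j = 0.
Proof.
move=> HL jB; rewrite (vlastE _ HL) sumA_eq //.
case: (HL) => _ [_ [_ [_ [_ [_ Hv]]]]]; rewrite (Hv j jB).
by under eq_bigr => i _ do rewrite (Vsym HL); rewrite subrr.
Qed.

Lemma a_bounds (R : realFieldType) n m M (V : 'M[R]_(dimL n)) (k : 'I_(dimL n)) :
  0 < m -> m <= M -> inL m M V ->
  [/\ 0 <= vlast V k <= M, ((k < n.-1)%N -> m <= vlast V k) & ((k : nat) = n.-1 -> vlast V k = 0)].
Proof.
move=> m0 mM HL.
case kA: (k < n)%N; last first.
  have kB : (n <= k)%N by rewrite leqNgt kA.
  rewrite (aB HL kB); split; first by apply/andP; split => //; lra.
    by move=> h; move: kA; rewrite (leq_trans h) // leq_pred.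
  by move=> e; move: (ltn_ord k) kA; rewrite e -addnn; lia.
rewrite (aA HL kA).
case: (HL) => _ [_ [_ [_ [Hiv [Hn _]]]]].
have [lt|ge] := ltnP k n.-1.
  case/andP: (Hiv k lt) => a b; split => //; first by apply/andP; split; lra.
  by move=> e; move: lt; rewrite e ltnn.
have e : (k : nat) = n.-1 by move: (k : nat) ge kA => k'; lia.
rewrite (Hn k e) subrr; split; [apply/andP; split; lra | by [] | by []].
Qed.

Lemma Vu (R : realFieldType) n m M (V : 'M[R]_(dimL n)) (k : 'I_(dimL n)) :
  inL m M V -> \sum_r V k r * uu R r = vlast V k.
Proof.
move=> HL; rewrite (rowsum _ _ HL) (vlastE _ HL).
have [kA|kB] : (k < n)%N \/ (n <= k)%N by case: ltnP; auto.
  rewrite (@sumB_eq R n k (fun r => V k r * uu R r) kA) (@sumB_eq R n k (V k) kA) /uu kA mulr1.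
  rewrite -sumrN; congr (_ + _); apply: eq_bigr => r; rewrite leqNgt => /negbTE ->.
  by rewrite mulrN1.
rewrite (@sumA_eq R n k (fun r => V k r * uu R r) kB) (@sumA_eq R n k (V k) kB) /uu ltnNge kB /=.
under eq_bigr => r rA do rewrite rA mulr1.
case: (HL) => _ [_ [_ [_ [_ [_ Hv]]]]].
have -> : \sum_(r < dimL n | (r < n)%N) V k r = V k k.
  by rewrite (Hv k kB); apply: eq_bigr => i _; exact: (Vsym HL).
ring.
Qed.


Lemma cntA (R : realFieldType) n : (0 < n)%N ->
  \sum_(i : 'I_(dimL n) | (i < n)%N) (1 : R) = n%:R.
Proof.
move=> n0.
have le : (n <= dimL n)%N by rewrite -addnn; lia.
have := big_ord_widen_cond (idx := 0) (op := +%R) (dimL n) (fun _ => true) (fun _ => (1:R)) le.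
rewrite /= => <-.
by rewrite sumr_const card_ord.
Qed.

Lemma cntB (R : realFieldType) n : (0 < n)%N ->
  \sum_(j : 'I_(dimL n) | (n <= j)%N) (1 : R) = n%:R - 1.
Proof.
move=> n0.
have tot : \sum_(j : 'I_(dimL n)) (1 : R) = (dimL n)%:R by rewrite sumr_const card_ord.
rewrite (bigID (fun j : 'I_(dimL n) => (j < n)%N)) /= cntA // in tot.
have e : ((dimL n)%:R : R) = n%:R + (n.-1)%:R by rewrite -natrD; congr (_%:R); rewrite -addnn; lia.
rewrite e in tot.
have -> : \sum_(j : 'I_(dimL n) | (n <= j)%N) (1 : R) = \sum_(j : 'I_(dimL n) | ~~ (j < n)%N) (1 : R).
  by apply: eq_bigl => j; rewrite leqNgt.
have -> : (n%:R : R) - 1 = (n.-1)%:R by rewrite -{1}(prednK n0) -natr1 addrK.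
by move/addrI: tot.
Qed.

Lemma sum_const_le (R : realFieldType) (I : finType) (P : pred I) (F : I -> R) c :
  (forall i, P i -> F i <= c) -> \sum_(i | P i) F i <= (\sum_(i | P i) (1:R)) * c.
Proof.
move=> H; rewrite mulr_suml; apply: ler_sum => i Pi; rewrite mul1r; exact: H.
Qed.

Lemma diagA (R : realFieldType) n m M (V : 'M[R]_(dimL n)) (i : 'I_(dimL n)) :
  (2 <= n)%N -> 0 < m -> m <= M -> inL m M V -> (i < n)%N ->
  (n%:R - 2) * m <= V i i <= n%:R * M.
Proof.
move=> n2 m0 mM HL iA.
have e : V i i = vlast V i + \sum_(j : 'I_(dimL n) | (n <= j)%N) V i j by rewrite (aA HL iA); ring.
have [aB _ _] := a_bounds i m0 mM HL; case/andP: aB => a0 aM.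
have lb : m * (\sum_(j : 'I_(dimL n) | (n <= j)%N) (1:R) - 1) <=
          \sum_(j : 'I_(dimL n) | (n <= j)%N) V i j * 1.
  apply: (sum_lb (Q := fun j : 'I_(dimL n) => (j : nat) == (n + i)%N)); try lra.
  - by move=> j1 j2 _ _ /eqP e1 /eqP e2; apply: val_inj; rewrite /= e1 e2.
  - move=> j jB; case: (eqVneq i j) => [eij|nij]; first by move: jB; rewrite -eij leqNgt iA.
    by case/andP: (Voff m0 mM HL nij).
  - by move=> j jB nQ; apply: (VAB HL).
  - by move=> j _; rewrite lexx ler01.
have ub : \sum_(j : 'I_(dimL n) | (n <= j)%N) V i j <= (\sum_(j : 'I_(dimL n) | (n <= j)%N) (1:R)) * M.
  apply: sum_const_le => j jB; case: (eqVneq i j) => [eij|nij]; first by move: jB; rewrite -eij leqNgt iA.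
  by case/andP: (Voff m0 mM HL nij).
rewrite cntB ?(leq_trans _ n2) // in lb ub.
have e1 : \sum_(j : 'I_(dimL n) | (n <= j)%N) V i j * 1 = \sum_(j : 'I_(dimL n) | (n <= j)%N) V i j.
  by apply: eq_bigr => j _; rewrite mulr1.
rewrite e1 in lb.
rewrite e; apply/andP; split; nra.
Qed.

Lemma diagB (R : realFieldType) n m M (V : 'M[R]_(dimL n)) (j : 'I_(dimL n)) :
  (2 <= n)%N -> 0 < m -> m <= M -> inL m M V -> (n <= j)%N ->
  V j j = \sum_(i : 'I_(dimL n) | (i < n)%N) V i j /\ (n%:R - 1) * m <= V j j.
Proof.
move=> n2 m0 mM HL jB.
have Hv : V j j = \sum_(i : 'I_(dimL n) | (i < n)%N) V i j by case: HL => _ [_ [_ [_ [_ [_ Hv]]]]]; apply: Hv.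
split => //.
have lb : m * (\sum_(i : 'I_(dimL n) | (i < n)%N) (1:R) - 1) <=
          \sum_(i : 'I_(dimL n) | (i < n)%N) V i j * 1.
  apply: (sum_lb (Q := fun i : 'I_(dimL n) => (j : nat) == (n + i)%N)); try lra.
  - by move=> j1 j2 _ _ /eqP e1 /eqP e2; apply: val_inj; move: e1 e2; rewrite /=; lia.
  - move=> i iA; case: (eqVneq i j) => [eij|nij]; first by move: jB; rewrite -eij leqNgt iA.
    by case/andP: (Voff m0 mM HL nij).
  - by move=> i iA nQ; apply: (VAB HL).
  - by move=> i _; rewrite lexx ler01.
have e1 : \sum_(i : 'I_(dimL n) | (i < n)%N) V i j * 1 = \sum_(i : 'I_(dimL n) | (i < n)%N) V i j.
  by apply: eq_bigr => i _; rewrite mulr1.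
rewrite e1 cntA ?(leq_trans _ n2) // -Hv in lb; lra.
Qed.

Lemma diag_all (R : realFieldType) n m M (V : 'M[R]_(dimL n)) (l : 'I_(dimL n)) :
  (2 <= n)%N -> 0 < m -> m <= M -> inL m M V -> (n%:R - 2) * m <= V l l.
Proof.
move=> n2 m0 mM HL.
have [lA|lB] : (l < n)%N \/ (n <= l)%N by case: ltnP; auto.
  by case/andP: (diagA n2 m0 mM HL lA).
have [_ h] := diagB n2 m0 mM HL lB; nra.
Qed.

Lemma sumA_a (R : realFieldType) n m M (V : 'M[R]_(dimL n)) :
  (2 <= n)%N -> 0 < m -> m <= M -> inL m M V ->
  vcorner V = \sum_(i : 'I_(dimL n) | (i < n)%N) vlast V i /\
  (n%:R - 1) * m <= vcorner V.
Proof.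
move=> n2 m0 mM HL.
have e : vcorner V = \sum_(i : 'I_(dimL n) | (i < n)%N) vlast V i.
  rewrite /vcorner (bigID (fun i : 'I_(dimL n) => (i < n)%N)) /= [X in _ + X]big1 ?addr0 //.
  by move=> i; rewrite -leqNgt => iB; exact: (aB HL iB).
split => //; rewrite e.
have lb : m * (\sum_(i : 'I_(dimL n) | (i < n)%N) (1:R) - 1) <=
          \sum_(i : 'I_(dimL n) | (i < n)%N) vlast V i * 1.
  apply: (sum_lb (Q := fun i : 'I_(dimL n) => (i : nat) == n.-1)); try lra.
  - by move=> j1 j2 _ _ /eqP e1 /eqP e2; apply: val_inj; rewrite /= e1 e2.
  - by move=> i _; have [/andP[] ] := a_bounds i m0 mM HL.
  - move=> i iA nQ; have [_ h _] := a_bounds i m0 mM HL; apply: h.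
    by move: nQ iA; move: (i : nat) => i'; lia.
  - by move=> i _; rewrite lexx ler01.
have e1 : \sum_(i : 'I_(dimL n) | (i < n)%N) vlast V i * 1 = \sum_(i : 'I_(dimL n) | (i < n)%N) vlast V i.
  by apply: eq_bigr => i _; rewrite mulr1.
rewrite e1 cntA ?(leq_trans _ n2) // in lb; lra.
Qed.


Lemma div_bound (R : realFieldType) (P0 v d phi : R) :
  0 < P0 -> P0 <= v -> 0 <= phi -> v * d <= phi -> d <= phi / P0.
Proof.
move=> P0p Pv phi0 h; rewrite ler_pdivlMr //.
have [d0|d0] := leP d 0.
  have : d * P0 <= 0 by apply: mulr_le0_ge0 => //; lra.
  lra.
nra.
Qed.

Lemma div_anti (R : realFieldType) (P0 Q0 phi : R) :
  0 < P0 -> P0 <= Q0 -> 0 <= phi -> phi / Q0 <= phi / P0.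
Proof.
move=> P0p PQ phi0; apply: (div_bound (v := Q0)) => //.
have Q0n : Q0 != 0 by apply/eqP => e; rewrite e in PQ; lra.
by rewrite mulrCA divff ?mulr1.
Qed.

Lemma Dlemma (R : realFieldType) (D P0 v Q0 phi T : R) :
  0 <= D -> 0 < P0 -> P0 <= v -> v <= Q0 -> 0 <= phi -> T - phi <= v * D ->
  T / Q0 - phi / P0 <= D.
Proof.
move=> D0 P0p Pv vQ phi0 h.
have Q0p : 0 < Q0 by lra.
have h2 : T - phi <= Q0 * D by nra.
have h3 : (T - phi) / Q0 <= D by rewrite ler_pdivrMr // mulrC.
have h4 := div_anti P0p (le_trans Pv vQ) phi0.
have -> : T / Q0 = (T - phi) / Q0 + phi / Q0 by rewrite mulrBl; ring.
lra.
Qed.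

Definition Kb (R : realFieldType) (n : nat) (m M phi sig0 : R) : R :=
  let t := (n%:R : R) in
  let eps := phi / ((t - 2) * m) in
  let eps0 := sig0 / ((t - 1) * m) in
  let th := (t - 3) * (m / (t * M)) in
  (2 * (eps + eps0) + 2 * eps) / th + eps0 + eps.

Lemma core (R : realFieldType) n m M (V : 'M[R]_(dimL n)) (w f : 'I_(dimL n) -> R) (phi sig0 : R) :
  (7 <= n)%N -> 0 < m -> m <= M -> inL m M V -> 0 <= phi -> 0 <= sig0 ->
  (forall k, \sum_r V k r * w r = f k) ->
  (forall k, `|f k| <= phi) ->
  `|\sum_k uu R k * f k| <= sig0 ->
  forall k, `|w k| <= Kb n m M phi sig0.
Proof.
move=> n7 m0 mM HL phi0 sig00 Hw Hf Hsig.
have n2 : (2 <= n)%N by apply: leq_trans n7.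
have n0 : (0 < n)%N by apply: leq_trans n7.
set t := (n%:R : R).
have t7 : 7 <= t by rewrite /t (ler_nat R 7 n).
set x := fun k => uu R k * w k.
have xw : forall k, `|w k| = `|x k|.
  by move=> k; rewrite /x /uu; case: ifP => _; rewrite ?mul1r // mulN1r normrN.
have xA : forall k : 'I_(dimL n), (k < n)%N -> x k = w k.
  by move=> k kA; rewrite /x /uu kA mul1r.
have xB : forall k : 'I_(dimL n), (n <= k)%N -> x k = - w k.
  by move=> k kB; rewrite /x /uu ltnNge kB /= mulN1r.
have EA : forall i : 'I_(dimL n), (i < n)%N ->
    V i i * x i - \sum_(j : 'I_(dimL n) | (n <= j)%N) V i j * x j = f i.
  move=> i iA; rewrite -Hw (rowsum _ _ HL) (@sumB_eq R n i (fun r => V i r * w r) iA) xA //.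
  rewrite -sumrN; congr (_ + _); apply: eq_bigr => j jB; rewrite xB //; ring.
have EB : forall j : 'I_(dimL n), (n <= j)%N ->
    V j j * x j - \sum_(i : 'I_(dimL n) | (i < n)%N) V i j * x i = - f j.
  move=> j jB; rewrite -Hw (rowsum _ _ HL) (@sumA_eq R n j (fun r => V j r * w r) jB) xB //.
  rewrite opprD; congr (_ - _); first ring.
  by apply: eq_bigr => i iA; rewrite xA // (Vsym HL).
have S1 : \sum_(i : 'I_(dimL n) | (i < n)%N) vlast V i * x i = \sum_k uu R k * f k.
  transitivity (\sum_r vlast V r * w r).
    rewrite [RHS](bigID (fun i : 'I_(dimL n) => (i < n)%N)) /= [X in _ = _ + X]big1 ?addr0.
      by apply: eq_big => // i iA; rewrite xA.
    by move=> i; rewrite -leqNgt => iB; rewrite (aB HL iB) mul0r.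
  transitivity (\sum_r (\sum_k V r k * uu R k) * w r).
    by apply: eq_bigr => r _; rewrite (Vu r HL).
  transitivity (\sum_r \sum_k uu R k * (V k r * w r)).
    apply: eq_bigr => r _; rewrite mulr_suml; apply: eq_bigr => k _; rewrite (Vsym HL); ring.
  rewrite exchange_big /=; apply: eq_bigr => k _; rewrite -Hw mulr_sumr //.
have A0 : (0 < dimL n)%N by rewrite -addnn; lia.
have Pi0 : ((Ordinal A0 : nat) < n)%N by [].
have [i1 i1A Hmax] := arg_maxP (i0 := Ordinal A0) (P := fun i : 'I_(dimL n) => (i < n)%N) x Pi0.
have [i2 i2A Hmin] := arg_minP (i0 := Ordinal A0) (P := fun i : 'I_(dimL n) => (i < n)%N) x Pi0.
set MA := x i1 in Hmax *; set mA := x i2 in Hmin *.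
have HmaxA : forall i : 'I_(dimL n), (i < n)%N -> x i <= MA by move=> i iA; exact: Hmax.
have HminA : forall i : 'I_(dimL n), (i < n)%N -> mA <= x i by move=> i iA; exact: Hmin.
have mAMA : mA <= MA by apply: HmaxA.
have [cornE sAlb] := sumA_a n2 m0 mM HL.
set sA := \sum_(i : 'I_(dimL n) | (i < n)%N) vlast V i in cornE.
have sApos : 0 < sA by rewrite -cornE; apply: lt_le_trans sAlb; apply: mulr_gt0 => //; lra.
have aAx1 : sA * mA <= \sum_(i : 'I_(dimL n) | (i < n)%N) vlast V i * x i.
  rewrite /sA mulr_suml; apply: ler_sum => i iA.
  have [/andP[a0 _] _ _] := a_bounds i m0 mM HL.
  by apply: ler_wpM2l => //; apply: HminA.
have aAx2 : \sum_(i : 'I_(dimL n) | (i < n)%N) vlast V i * x i <= sA * MA.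
  rewrite /sA mulr_suml; apply: ler_sum => i iA.
  have [/andP[a0 _] _ _] := a_bounds i m0 mM HL.
  by apply: ler_wpM2l => //; apply: HmaxA.
rewrite S1 in aAx1 aAx2.
move: Hsig; rewrite ler_norml => /andP[sg1 sg2].
have sA1 : (t - 1) * m <= sA by rewrite -cornE.
have tm1 : 0 < (t - 1) * m by apply: mulr_gt0 => //; lra.
have tm2 : 0 < (t - 2) * m by apply: mulr_gt0 => //; lra.
set eps := phi / ((t - 2) * m).
set eps0 := sig0 / ((t - 1) * m).
have eps_ge0 : 0 <= eps by apply: divr_ge0 => //; lra.
have eps0_ge0 : 0 <= eps0 by apply: divr_ge0 => //; lra.
have mA_le : mA <= eps0 by apply: (div_bound tm1 sA1) => //; lra.
have MA_ge : - eps0 <= MA by rewrite lerNl; apply: (div_bound tm1 sA1) => //; lra.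
have eps'_le : phi / ((t - 1) * m) <= eps by apply: div_anti => //; lra.
have SB : forall j : 'I_(dimL n), (n <= j)%N -> mA - eps <= x j <= MA + eps.
  move=> j jB.
  have [Vjj_eq Vjj_lb] := diagB n2 m0 mM HL jB.
  have Vij0 : forall i : 'I_(dimL n), (i < n)%N -> 0 <= V i j.
    move=> i iA; have nij : i != j by apply/eqP => e; move: jB; rewrite -e leqNgt iA.
    by case/andP: (Voff m0 mM HL nij).
  have hEB := EB j jB.
  have hf := Hf j; rewrite ler_norml in hf; case/andP: hf => hf1 hf2.
  have spl1 : \sum_(i : 'I_(dimL n) | (i < n)%N) V i j * (x i - MA) =
     \sum_(i : 'I_(dimL n) | (i < n)%N) V i j * x i - (\sum_(i : 'I_(dimL n) | (i < n)%N) V i j) * MA.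
    by rewrite mulr_suml -sumrB; apply: eq_bigr => i _; ring.
  have spl2 : \sum_(i : 'I_(dimL n) | (i < n)%N) V i j * (x i - mA) =
     \sum_(i : 'I_(dimL n) | (i < n)%N) V i j * x i - (\sum_(i : 'I_(dimL n) | (i < n)%N) V i j) * mA.
    by rewrite mulr_suml -sumrB; apply: eq_bigr => i _; ring.
  have neg1 : \sum_(i : 'I_(dimL n) | (i < n)%N) V i j * (x i - MA) <= 0.
    apply: (@le_trans _ _ (\sum_(i : 'I_(dimL n) | (i < n)%N) (0:R))); last by rewrite big1_eq.
    apply: ler_sum => i iA; apply: mulr_ge0_le0; first exact: Vij0.
    by have := HmaxA i iA; lra.
  have pos2 : 0 <= \sum_(i : 'I_(dimL n) | (i < n)%N) V i j * (x i - mA).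
    apply: sumr_ge0 => i iA; apply: mulr_ge0; first exact: Vij0.
    by have := HminA i iA; lra.
  have u1 : V j j * (x j - MA) <= phi.
    have -> : V j j * (x j - MA) = V j j * x j - V j j * MA by ring.
    rewrite {2}Vjj_eq; lra.
  have u2 : V j j * (mA - x j) <= phi.
    have -> : V j j * (mA - x j) = V j j * mA - V j j * x j by ring.
    rewrite {1}Vjj_eq; lra.
  have tmV : (t - 1) * m <= V j j by [].
  have := div_bound tm1 tmV phi0 u1; have := div_bound tm1 tmV phi0 u2.
  move=> h1 h2; apply/andP; split; lra.
set eps1 := eps + eps0.
set Mb := MA + eps1. set mb := mA - eps1. set Rr := Mb - mb.
have xBb : forall j : 'I_(dimL n), (n <= j)%N -> mb <= x j <= Mb.
  by move=> j jB; have /andP[h1 h2] := SB j jB; apply/andP; split; rewrite /mb /Mb /eps1; lra.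
have Mb0 : 0 <= Mb by rewrite /Mb /eps1; lra.
have mb0 : mb <= 0 by rewrite /mb /eps1; lra.
have Rr0 : 0 <= Rr by rewrite /Rr; lra.
have M0 : 0 < M by lra.
have tM : 0 < t * M by apply: mulr_gt0 => //; lra.
set ka := m / (t * M).
have ka0 : 0 < ka by apply: divr_gt0.
set S1s := \sum_(j : 'I_(dimL n) | (n <= j)%N) (Mb - x j).
set S2s := \sum_(j : 'I_(dimL n) | (n <= j)%N) (x j - mb).
have Vpos : forall i j : 'I_(dimL n), (i < n)%N -> (n <= j)%N -> 0 <= V i j.
  move=> i j iA jB; have nij : i != j by apply/eqP => e; move: jB; rewrite -e leqNgt iA.
  by case/andP: (Voff m0 mM HL nij).
have uniqQ : forall i : 'I_(dimL n), forall j1 j2 : 'I_(dimL n), (n <= j1)%N -> (n <= j2)%N ->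
    (j1 : nat) == (n + i)%N -> (j2 : nat) == (n + i)%N -> j1 = j2.
  by move=> i j1 j2 _ _ /eqP e1 /eqP e2; apply: val_inj; rewrite /= e1 e2.
have D1b : ka * (S1s - Rr) - eps <= Mb - MA.
  have hE := EA i1 i1A.
  have aE := aA HL i1A.
  have [/andP[a0 _] _ _] := a_bounds i1 m0 mM HL.
  have /andP[dl du] := diagA n2 m0 mM HL i1A.
  have lbs : m * (S1s - Rr) <= \sum_(j : 'I_(dimL n) | (n <= j)%N) V i1 j * (Mb - x j).
    apply: (sum_lb (Q := fun j : 'I_(dimL n) => (j : nat) == (n + i1)%N)); try lra.
    - by move=> j1 j2; apply: uniqQ.
    - by move=> j jB; apply: Vpos.
    - by move=> j jB nQ; apply: (VAB HL).
    - by move=> j jB; have /andP[h1 h2] := xBb j jB; apply/andP; split; rewrite /Rr; lra.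
  have spl : \sum_(j : 'I_(dimL n) | (n <= j)%N) V i1 j * (Mb - x j) =
      (\sum_(j : 'I_(dimL n) | (n <= j)%N) V i1 j) * Mb - \sum_(j : 'I_(dimL n) | (n <= j)%N) V i1 j * x j.
    by rewrite mulr_suml -sumrB; apply: eq_bigr => j _; ring.
  have e1 : V i1 i1 * Mb = vlast V i1 * Mb + (\sum_(j : 'I_(dimL n) | (n <= j)%N) V i1 j) * Mb.
    by rewrite aE; ring.
  have aMb : 0 <= vlast V i1 * Mb by apply: mulr_ge0.
  have key : m * (S1s - Rr) - phi <= V i1 i1 * (Mb - MA).
    have hf := Hf i1; rewrite ler_norml in hf; case/andP: hf => hf1 hf2.
    have -> : V i1 i1 * (Mb - MA) = V i1 i1 * Mb - V i1 i1 * MA by ring.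
    rewrite /MA; lra.
  have := Dlemma (D := Mb - MA) (P0 := (t - 2) * m) (v := V i1 i1) (Q0 := t * M) (T := m * (S1s - Rr)).
  have -> : m * (S1s - Rr) / (t * M) = ka * (S1s - Rr) by rewrite /ka; ring.
  move=> h; apply: h => //; rewrite /Mb /eps1; lra.
have D2b : ka * (S2s - Rr) - eps <= mA - mb.
  have hE := EA i2 i2A.
  have aE := aA HL i2A.
  have [/andP[a0 _] _ _] := a_bounds i2 m0 mM HL.
  have /andP[dl du] := diagA n2 m0 mM HL i2A.
  have lbs : m * (S2s - Rr) <= \sum_(j : 'I_(dimL n) | (n <= j)%N) V i2 j * (x j - mb).
    apply: (sum_lb (Q := fun j : 'I_(dimL n) => (j : nat) == (n + i2)%N)); try lra.
    - by move=> j1 j2; apply: uniqQ.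
    - by move=> j jB; apply: Vpos.
    - by move=> j jB nQ; apply: (VAB HL).
    - by move=> j jB; have /andP[h1 h2] := xBb j jB; apply/andP; split; rewrite /Rr; lra.
  have spl : \sum_(j : 'I_(dimL n) | (n <= j)%N) V i2 j * (x j - mb) =
      \sum_(j : 'I_(dimL n) | (n <= j)%N) V i2 j * x j - (\sum_(j : 'I_(dimL n) | (n <= j)%N) V i2 j) * mb.
    by rewrite mulr_suml -sumrB; apply: eq_bigr => j _; ring.
  have e1 : V i2 i2 * mb = vlast V i2 * mb + (\sum_(j : 'I_(dimL n) | (n <= j)%N) V i2 j) * mb.
    by rewrite aE; ring.
  have aMb : vlast V i2 * mb <= 0 by apply: mulr_ge0_le0.
  have key : m * (S2s - Rr) - phi <= V i2 i2 * (mA - mb).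
    have hf := Hf i2; rewrite ler_norml in hf; case/andP: hf => hf1 hf2.
    have -> : V i2 i2 * (mA - mb) = V i2 i2 * mA - V i2 i2 * mb by ring.
    rewrite /mA; lra.
  have := Dlemma (D := mA - mb) (P0 := (t - 2) * m) (v := V i2 i2) (Q0 := t * M) (T := m * (S2s - Rr)).
  have -> : m * (S2s - Rr) / (t * M) = ka * (S2s - Rr) by rewrite /ka; ring.
  move=> h; apply: h => //; rewrite /mb /eps1; lra.
have hS : S1s + S2s = (t - 1) * Rr.
  rewrite /S1s /S2s -big_split /=.
  transitivity (\sum_(j : 'I_(dimL n) | (n <= j)%N) (1:R) * Rr).
    by apply: eq_bigr => j _; rewrite /Rr; ring.
  by rewrite -mulr_suml cntB.
set th := (t - 3) * ka.
have th0 : 0 < th by apply: mulr_gt0 => //; lra.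
have hsum : ka * (S1s - Rr) + ka * (S2s - Rr) = th * Rr.
  have -> : ka * (S1s - Rr) + ka * (S2s - Rr) = ka * ((S1s + S2s) - 2 * Rr) by ring.
  by rewrite hS /th; ring.
set RA := MA - mA.
have thRr : th * Rr = th * RA + 2 * (th * eps1) by rewrite /Rr /Mb /mb /RA; ring.
have the1 : 0 <= th * eps1 by apply: mulr_ge0; rewrite /eps1; lra.
have RAth : RA * th <= 2 * eps1 + 2 * eps.
  have h0 := lerD D1b D2b.
  have e1 : ka * (S1s - Rr) - eps + (ka * (S2s - Rr) - eps) = th * Rr - 2 * eps.
    by rewrite -hsum; ring.
  have e2 : Mb - MA + (mA - mb) = Rr - RA by rewrite /Rr /RA; ring.
  rewrite e1 e2 in h0.
  have : RA <= Rr - th * Rr + 2 * eps.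
    move: h0; clear; move=> h0; lra.
  rewrite thRr => h.
  have -> : RA * th = th * RA by rewrite mulrC.
  have eR : Rr = RA + 2 * eps1 by rewrite /Rr /RA /Mb /mb; ring.
  move: h eR the1; clear; move=> h eR the1; lra.
have RAb : RA <= (2 * eps1 + 2 * eps) / th by rewrite ler_pdivlMr.
have KbE : Kb n m M phi sig0 = (2 * eps1 + 2 * eps) / th + eps0 + eps by [].
move=> k; rewrite xw KbE ler_norml.
have [kA|kB] : (k < n)%N \/ (n <= k)%N by case: ltnP; auto.
  have h1 := HmaxA k kA; have h2 := HminA k kA.
  apply/andP; split; rewrite /RA in RAb; lra.
have /andP[h1 h2] := SB k kB.
apply/andP; split; rewrite /RA in RAb; lra.
Qed.


Lemma Kb_bound (R : realFieldType) n (m M : R) : (7 <= n)%N -> 0 < m -> m <= M ->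
  Kb n m M (2 * M / ((n%:R - 2) * m)) (M / ((n%:R - 2) * m))
    <= 100 * M ^+ 2 / (m ^+ 3 * (n.-1)%:R ^+ 2).
Proof.
move=> n7 m0 mM.
have n0 : (0 < n)%N by apply: leq_trans n7.
have -> : ((n.-1)%:R : R) = n%:R - 1 by rewrite -{2}(prednK n0) -natr1 addrK.
rewrite /Kb.
set t := (n%:R : R).
have t7 : 7 <= t by rewrite /t (ler_nat R 7 n).
set q := M / m.
have q1 : 1 <= q by rewrite /q ler_pdivlMr // mul1r.
have m0' : m != 0 by apply/eqP => e; lra.
have M0' : M != 0 by apply/eqP => e; lra.
have t1 : t - 1 != 0 by apply/eqP => e; lra.
have t2 : t - 2 != 0 by apply/eqP => e; lra.
have t3 : t - 3 != 0 by apply/eqP => e; lra.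
have t0 : t != 0 by apply/eqP => e; lra.
set X := (10 * t - 12) * t * q / ((t - 2) ^+ 2 * (t - 1) * (t - 3)) + (3 * t - 4) / ((t - 2) ^+ 2 * (t - 1)).
set Y := 100 * q / (t - 1) ^+ 2.
have EX : (2 * (2 * M / ((t - 2) * m) / ((t - 2) * m) + M / ((t - 2) * m) / ((t - 1) * m)) +
   2 * (2 * M / ((t - 2) * m) / ((t - 2) * m))) / ((t - 3) * (m / (t * M))) +
  M / ((t - 2) * m) / ((t - 1) * m) + 2 * M / ((t - 2) * m) / ((t - 2) * m) = q / m * X.
  rewrite /X /q; field; rewrite ?m0' ?M0' ?t1 ?t2 ?t3 ?t0 //=.
have EY : 100 * M ^+ 2 / (m ^+ 3 * (t - 1) ^+ 2) = q / m * Y.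
  rewrite /Y /q; field; rewrite ?m0' ?t1 //.
rewrite EX EY; apply: ler_wpM2l; first by apply: divr_ge0; lra.
rewrite -subr_le0.
have EXY : X - Y = ((10 * t - 12) * t * (t - 1) * q + (3 * t - 4) * (t - 1) * (t - 3)
                    - 100 * q * (t - 2) ^+ 2 * (t - 3)) / ((t - 2) ^+ 2 * (t - 1) ^+ 2 * (t - 3)).
  rewrite /X /Y; field; rewrite ?t1 ?t2 ?t3 //.
rewrite EXY; apply: mulr_le0_ge0; last first.
  by rewrite invr_ge0; apply: mulr_ge0; [apply: mulr_ge0|]; rewrite ?exprn_ge0 //; lra.
have tq : (3 * t - 4) * (t - 1) * (t - 3) <= q * ((3 * t - 4) * (t - 1) * (t - 3)).
  rewrite -[X in X <= _]mul1r; apply: ler_wpM2r => //.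
  by apply: mulr_ge0; [apply: mulr_ge0|]; lra.
have poly : (10 * t - 12) * t * (t - 1) + (3 * t - 4) * (t - 1) * (t - 3) <= 100 * (t - 2) ^+ 2 * (t - 3).
  have e : 100 * (t - 2) ^+ 2 * (t - 3) - ((10 * t - 12) * t * (t - 1) + (3 * t - 4) * (t - 1) * (t - 3))
     = 87 * (t - 7) ^+ 3 + 1165 * (t - 7) ^+ 2 + 5084 * (t - 7) + 7156 by ring.
  have p3 : 0 <= (t - 7) ^+ 3 by apply: exprn_ge0; lra.
  have p2 : 0 <= (t - 7) ^+ 2 by apply: exprn_ge0; lra.
  rewrite -subr_ge0 e; lra.
have : q * ((10 * t - 12) * t * (t - 1) + (3 * t - 4) * (t - 1) * (t - 3)) <= q * (100 * (t - 2) ^+ 2 * (t - 3)).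
  by apply: ler_wpM2l => //; lra.
have e2 : (10 * t - 12) * t * (t - 1) * q + (3 * t - 4) * (t - 1) * (t - 3) - 100 * q * (t - 2) ^+ 2 * (t - 3)
  = q * ((10 * t - 12) * t * (t - 1)) + (3 * t - 4) * (t - 1) * (t - 3) - q * (100 * (t - 2) ^+ 2 * (t - 3)) by ring.
have e3 : q * ((10 * t - 12) * t * (t - 1) + (3 * t - 4) * (t - 1) * (t - 3)) =
   q * ((10 * t - 12) * t * (t - 1)) + q * ((3 * t - 4) * (t - 1) * (t - 3)) by ring.
rewrite e2; move=> h; lra.
Qed.


Lemma Sentry (R : realFieldType) n (V : 'M[R]_(dimL n)) (r l : 'I_(dimL n)) :
  Smat V r l = (r == l)%:R * (V l l)^-1 + (vcorner V)^-1 * (uu R r * uu R l).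
Proof.
rewrite /Smat mxE /uu.
case: (eqVneq r l) => [->|rl]; first by rewrite !eqxx /=; case: (l < n)%N => /=; ring.
by case: (r < n)%N; case: (l < n)%N => /=; ring.
Qed.

Lemma Kb0 (R : realFieldType) n (m M : R) : Kb n m M 0 0 = 0.
Proof. by rewrite /Kb /= !(mul0r, mulr0, addr0). Qed.

Lemma unitV (R : realFieldType) n m M (V : 'M[R]_(dimL n)) :
  (7 <= n)%N -> 0 < m -> m <= M -> inL m M V -> V \in unitmx.
Proof.
move=> n7 m0 mM HL.
rewrite -row_free_unit; apply: inj_row_free => v hv.
apply/rowP => i; rewrite mxE.
have Hw : forall k, \sum_r V k r * v 0 r = (fun _ => 0 : R) k.
  move=> k; have hk : (v *m V) 0 k = 0 by rewrite hv mxE.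
  rewrite mxE in hk; apply: etrans _ hk.
  by apply: eq_bigr => r _; rewrite (Vsym HL) mulrC.
have Hf : forall k : 'I_(dimL n), `|(fun _ => 0 : R) k| <= 0 by move=> k; rewrite normr0.
have Hs : `|\sum_(k : 'I_(dimL n)) uu R k * (fun _ => 0 : R) k| <= 0.
  by rewrite big1 ?normr0 // => k _; rewrite mulr0.
have := core n7 m0 mM HL (lexx 0) (lexx 0) Hw Hf Hs i.
by rewrite Kb0 normr_le0 => /eqP.
Qed.


Lemma uu_cases (R : realFieldType) n (l : 'I_(dimL n)) : uu R l = 1 \/ uu R l = -1.
Proof. by rewrite /uu; case: (l < n)%N; auto. Qed.

Lemma sum_delta (R : realFieldType) N (F : 'I_N -> R) (l : 'I_N) :
  \sum_r F r * (r == l)%:R = F l.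
Proof.
rewrite (bigD1 l) //= eqxx mulr1 big1 ?addr0 // => r /negbTE ->; by rewrite mulr0.
Qed.

Lemma column_bound (R : realFieldType) n (m M : R) (V : 'M[R]_(dimL n)) (l : 'I_(dimL n)) :
  (7 <= n)%N -> 0 < m -> m <= M -> inL m M V ->
  forall k, `|(invmx V - Smat V) k l| <= Kb n m M (2 * M / ((n%:R - 2) * m)) (M / ((n%:R - 2) * m)).
Proof.
move=> n7 m0 mM HL.
have uV := unitV n7 m0 mM HL.
have n2 : (2 <= n)%N by apply: leq_trans n7.
set t := (n%:R : R).
have t7 : 7 <= t by rewrite /t (ler_nat R 7 n).
have [cornE sAlb] := sumA_a n2 m0 mM HL.
rewrite -/t in sAlb.
set c := (vcorner V)^-1.
have tm2 : 0 < (t - 2) * m by apply: mulr_gt0 => //; lra.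
have corn_pos : 0 < vcorner V by apply: lt_le_trans sAlb; apply: mulr_gt0 => //; lra.
have c0 : 0 <= c by rewrite /c invr_ge0; lra.
have cM : c * M <= M / ((t - 2) * m).
  rewrite /c mulrC; apply: (div_anti tm2); last lra.
  by apply: le_trans sAlb; apply: ler_wpM2r; lra.
have VllP : forall l : 'I_(dimL n), (t - 2) * m <= V l l by move=> l'; exact: (diag_all l' n2 m0 mM HL).
have Vll0 : V l l != 0 by apply/eqP => e; have := VllP l; rewrite e; lra.
have Vlpos : 0 < V l l by have := VllP l; lra.
set f := fun k : 'I_(dimL n) => (k == l)%:R - V k l / V l l - c * uu R l * vlast V k.
have Hw : forall k, \sum_r V k r * (invmx V - Smat V) r l = f k.
  move=> k; have : (V *m (invmx V - Smat V)) k l = \sum_r V k r * (invmx V - Smat V) r l by rewrite mxE.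
  move=> <-; rewrite mulmxBr mulmxV // !mxE /f.
  have -> : \sum_j V k j * Smat V j l = \sum_j (V k j * (V l l)^-1) * (j == l)%:R + c * uu R l * \sum_j V k j * uu R j.
    rewrite mulr_sumr -big_split /=; apply: eq_bigr => j _; rewrite Sentry -/c; ring.
  by rewrite sum_delta (Vu k HL); ring.
have Hf : forall k, `|f k| <= 2 * M / ((t - 2) * m).
  move=> k; rewrite /f.
  have [/andP[a0 aM] _ _] := a_bounds k m0 mM HL.
  have ca : 0 <= c * vlast V k <= M / ((t - 2) * m).
    apply/andP; split; first by apply: mulr_ge0.
    by apply: le_trans cM; apply: ler_wpM2l.
  have e2 : 2 * M / ((t - 2) * m) = M / ((t - 2) * m) + M / ((t - 2) * m) by ring.
  have q0 : 0 <= M / ((t - 2) * m) by apply: divr_ge0; lra.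
  case: (eqVneq k l) => [e|kl].
    subst k.
    rewrite (_ : (true%:R : R) = 1) // divff // subrr sub0r normrN normrM normrM.
    have : `|uu R l| = 1 by case: (uu_cases R l) => ->; rewrite ?normrN normr1.
    move=> ->; rewrite mulr1 (ger0_norm c0) (ger0_norm a0) e2.
    by case/andP: ca => _ h; lra.
  have /andP[v0 vM] := Voff m0 mM HL kl.
  have d : 0 <= V k l / V l l <= M / ((t - 2) * m).
    apply/andP; split; first by apply: divr_ge0 => //; lra.
    apply: le_trans (div_anti _ (VllP l) _) => //; last lra.
    by apply: ler_wpM2r => //; rewrite invr_ge0; lra.
  rewrite (_ : (false%:R : R) = 0) // sub0r ler_norml e2.
  have hca := ca; case/andP: hca => ca1 ca2; case/andP: d => d1 d2.
  case: (uu_cases R l) => ->; rewrite ?mulr1 ?mulrN1 ?mulNr; apply/andP; split; lra.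
have Hs : `|\sum_k uu R k * f k| <= M / ((t - 2) * m).
  have -> : \sum_k uu R k * f k = - (vlast V l / V l l).
    rewrite /f.
    have -> : \sum_k uu R k * ((k == l)%:R - V k l / V l l - c * uu R l * vlast V k) =
        \sum_k uu R k * (k == l)%:R - (\sum_k V l k * uu R k) / V l l
        - c * uu R l * \sum_k uu R k * vlast V k.
      rewrite mulr_suml mulr_sumr -!sumrB; apply: eq_bigr => k _; rewrite (Vsym HL); ring.
    rewrite sum_delta (Vu l HL).
    have -> : \sum_k uu R k * vlast V k = vcorner V.
      rewrite /vcorner; apply: eq_bigr => k _; rewrite /uu.
      case: ltnP => kn; first by rewrite mul1r.
      by rewrite (aB HL kn) mulr0.
    rewrite /c mulrAC mulVf; last by apply/eqP => e; lra.
    ring.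
  have [/andP[a0 aM] _ _] := a_bounds l m0 mM HL.
  rewrite normrN ger0_norm; last by apply: divr_ge0; lra.
  apply: le_trans (div_anti _ (VllP l) _) => //; last lra.
  by apply: ler_wpM2r => //; rewrite invr_ge0; lra.
move=> k.
apply: (core n7 m0 mM HL _ _ Hw Hf Hs k).
- by apply: divr_ge0; lra.
- by apply: divr_ge0; lra.
Qed.

End Helpers.
Import Helpers.


Theorem proposition1 (R : realFieldType) :
  exists c1 : R, 0 < c1 /\
  forall m M : nat -> R,
    (forall n, 0 < m n /\ m n <= M n) ->
    (* M_n / m_n = o(n) *)
    (forall eps : R, 0 < eps ->
       exists N : nat, forall n : nat, (N <= n)%N -> M n / m n <= eps * n%:R) ->
    exists N : nat, forall n : nat, (N <= n)%N ->
      forall V : 'M[R]_(dimL n), @inL R n (m n) (M n) V ->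
        V \in unitmx /\
        mxnorm (invmx V - Smat V) <= c1 * M n ^+ 2 / (m n ^+ 3 * (n.-1)%:R ^+ 2).
Proof.
exists 100; split; first lra.
move=> m M Hm _; exists 7%N => n n7 V HL.
have [m0 mM] := Hm n.
move: (m n) (M n) m0 mM HL => mm MM m0 mM HL.
split; first exact: (unitV n7 m0 mM HL).
have Kb := Kb_bound n7 m0 mM.
have rhs0 : 0 <= 100 * MM ^+ 2 / (mm ^+ 3 * (n.-1)%:R ^+ 2).
  apply: divr_ge0; first by apply: mulr_ge0; [lra | apply: exprn_ge0; lra].
  by apply: mulr_ge0; apply: exprn_ge0; [lra | apply: ler0n].
rewrite /mxnorm; apply: bigmax_le => // k _; apply: bigmax_le => // l _.
exact: le_trans (column_bound l n7 m0 mM HL k) Kb.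
Qed.
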